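(* Let $a\ge0$, let $f\colon[a,\infty)\to(0,\infty)$ be smooth, let $x$ be $C^1$, and let $(M,g,K)$ be the initial data set $M=[a,\infty)\times\mathbb S^2$, $g=ds^2+f(s)^2\gamma_*$, $K=x'(f(s))ds^2+x(f(s))f(s)\gamma_*$, with energy density satisfying $\mu\ge\tau$ for some $\tau\in\mathbb R$. Then for any $s_o>a$ with $f'(s_o)>0$ there exist $\delta>0$ and a smooth positive function $\widetilde f$ on $[s_o-\delta,\infty)$ with $\widetilde f=f$ on $[s_o,\infty)$ such that the initial data set $\widetilde M=[s_o-\delta,\infty)\times\mathbb S^2$, $\widetilde g=ds^2+\widetilde f^2\gamma_*$, $\widetilde K=x'(\widetilde f)ds^2+x(\widetilde f)\widetilde f\gamma_*$ has energy density $\widetilde\mu\ge\tau$ everywhere and $\widetilde\mu>\tau$ on $[s_o-\delta,s_o)$. Moreover, if in addition $f(s_o)>c>0$ and $f''(s_o)>0$, then $\delta$ can be chosen such that $\widetilde f(s_o-\delta)>c$ and $\widetilde f'(s_o-\delta)<f'(s_o)$.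
   Context: $\gamma_*$ is the standard round metric on $\mathbb S^2$; energy density $\mu=\tfrac12(R(g)+(\operatorname{tr}_gK)^2-|K|^2_g)$. *)

(* Defs.v *)
From Stdlib Require Import Reals.
From Coquelicot Require Import Coquelicot.
Open Scope R_scope.

(* Smooth function on R: derivatives of every order exist everywhere.
   A smooth function on a closed half-line [b,oo) is (Seeley) the restriction
   of such a function; only values on the half-line are ever used. *)
Definition smooth (f : R -> R) : Prop :=
  forall (n : nat) (s : R), ex_derive_n f n s.

(* x is C^1 on (0, oo) (the range of the warping function f). *)
Definition C1_pos (x : R -> R) : Prop :=
  forall y, 0 < y -> ex_derive x y /\ continuous (Derive x) y.

(* Rotationally symmetric data on I x S^2:
   g = ds^2 + f(s)^2 gamma_*, K = x'(f(s)) ds^2 + x(f(s)) f(s) gamma_*.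
   The quantities below are the pointwise scalar curvature R(g), tr_g K and
   |K|_g^2 of these data at (s, theta) (independent of theta). *)
Definition scal_warped (f : R -> R) (s : R) : R :=
  2 * (1 - (Derive f s) ^ 2) / (f s) ^ 2 - 4 * Derive_n f 2 s / f s.

Definition trK (f x : R -> R) (s : R) : R :=
  Derive x (f s) + 2 * (x (f s) * f s) / (f s) ^ 2.

Definition normK2 (f x : R -> R) (s : R) : R :=
  (Derive x (f s)) ^ 2 + 2 * ((x (f s) * f s) / (f s) ^ 2) ^ 2.

Definition mu (f x : R -> R) (s : R) : R :=
  / 2 * (scal_warped f s + (trK f x s) ^ 2 - normK2 f x s).

Definition good_extension (f x : R -> R) (tau so delta : R) (ft : R -> R) : Prop :=
  0 < delta /\ smooth ft /\
  (forall s, so - delta <= s -> 0 < ft s) /\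
  (forall s, so <= s -> ft s = f s) /\
  (forall s, so - delta <= s -> tau <= mu ft x s) /\
  (forall s, so - delta <= s < so -> tau < mu ft x s).

(* Main.v *)
Require Import Defs.
From Stdlib Require Import Reals Lra Lia.
From Coquelicot Require Import Coquelicot.
Open Scope R_scope.

Lemma Derive_n_S (f : R -> R) n x : Derive_n f (S n) x = Derive_n (Derive f) n x.
Proof.
  revert x; induction n; intros x; simpl. reflexivity.
  apply Derive_ext. intros t. apply IHn.
Qed.

Definition Cn (n : nat) (f : R -> R) := forall m, (m <= n)%nat -> forall s, ex_derive_n f m s.

Lemma Cn_0 f : Cn 0 f.
Proof. intros m Hm s. replace m with 0%nat by lia. exact I. Qed.

Lemma Cn_S n f : (forall s, ex_derive f s) -> Cn n (Derive f) -> Cn (S n) f.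
Proof.
  intros H1 H2 m Hm s. destruct m as [|m]. exact I.
  simpl. destruct m as [|m]. simpl. apply H1.
  apply (ex_derive_ext (Derive_n (Derive f) m)).
  intros t. symmetry. apply (Derive_n_S f m t).
  apply (H2 (S m)). lia.
Qed.

Lemma Cn_S_inv n f : Cn (S n) f -> (forall s, ex_derive f s) /\ Cn n (Derive f).
Proof.
  intros H. split. intros s. apply (H 1%nat). lia.
  intros m Hm s. destruct m as [|m]. exact I.
  simpl. apply (ex_derive_ext (Derive_n f (S m))).
  intros t. apply (Derive_n_S f m t).
  apply (H (S (S m))). lia.
Qed.

Lemma Cn_le n m f : (m <= n)%nat -> Cn n f -> Cn m f.
Proof. intros Hmn H k Hk s. apply H. lia. Qed.

Lemma Cn_ext n f g : (forall t, f t = g t) -> Cn n f -> Cn n g.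
Proof. intros E H m Hm s. apply (ex_derive_n_ext f). exact E. apply H; auto. Qed.

Lemma Cn_const n : forall c, Cn n (fun _ => c).
Proof.
  induction n; intros c. apply Cn_0. apply Cn_S.
  intros s. apply ex_derive_const.
  apply (Cn_ext n (fun _ => 0)). intros t. symmetry. apply Derive_const. apply IHn.
Qed.

Lemma Cn_plus n : forall f g, Cn n f -> Cn n g -> Cn n (fun t => f t + g t).
Proof.
  induction n; intros f g Hf Hg. apply Cn_0.
  apply Cn_S_inv in Hf as [Hf1 Hf2]. apply Cn_S_inv in Hg as [Hg1 Hg2].
  apply Cn_S. intros s. apply (ex_derive_plus f g s); auto.
  apply (Cn_ext n (fun t => Derive f t + Derive g t)).
  intros t. symmetry. apply Derive_plus; auto.
  apply IHn; auto.
Qed.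

Lemma Cn_mult n : forall f g, Cn n f -> Cn n g -> Cn n (fun t => f t * g t).
Proof.
  induction n; intros f g Hf Hg. apply Cn_0.
  pose proof Hf as Hf0. pose proof Hg as Hg0.
  apply Cn_S_inv in Hf as [Hf1 Hf2]. apply Cn_S_inv in Hg as [Hg1 Hg2].
  apply Cn_S. intros s. apply ex_derive_mult; auto.
  apply (Cn_ext n (fun t => Derive f t * g t + f t * Derive g t)).
  intros t. symmetry. apply Derive_mult; auto.
  apply Cn_plus; apply IHn; auto; apply (Cn_le (S n)); auto.
Qed.

Lemma Cn_comp n : forall f g, Cn n f -> Cn n g -> Cn n (fun t => f (g t)).
Proof.
  induction n; intros f g Hf Hg. apply Cn_0.
  pose proof Hf as Hf0. pose proof Hg as Hg0.
  apply Cn_S_inv in Hf as [Hf1 Hf2]. apply Cn_S_inv in Hg as [Hg1 Hg2].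
  apply Cn_S. intros s. apply (ex_derive_comp f g s); auto.
  apply (Cn_ext n (fun t => Derive f (g t) * Derive g t)).
  intros t. symmetry. rewrite Derive_comp; auto. ring.
  apply Cn_mult. apply IHn; auto. apply (Cn_le (S n)); auto. auto.
Qed.

Lemma Cn_id n : Cn n (fun t => t).
Proof.
  destruct n. apply Cn_0. apply Cn_S. intros s. apply ex_derive_id.
  apply (Cn_ext n (fun _ => 1)). intros t. symmetry. apply Derive_id. apply Cn_const.
Qed.

Lemma exp_mul_nat n v : exp (INR n * v) = exp v ^ n.
Proof.
  induction n. simpl. rewrite Rmult_0_l. apply exp_0.
  rewrite S_INR. replace ((INR n + 1) * v) with (INR n * v + v) by ring.
  rewrite exp_plus, IHn. simpl. ring.
Qed.

Lemma exp_pow_bound N u : (0 < N)%nat -> 0 <= u -> (u / INR N) ^ N <= exp u.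
Proof.
  intros HN Hu. assert (HN' : 0 < INR N) by (apply lt_0_INR; lia).
  replace u with (INR N * (u / INR N)) at 2 by (field; lra).
  rewrite exp_mul_nat. apply pow_incr. split.
  apply Rdiv_le_0_compat; lra.
  pose proof (exp_ineq1_le (u / INR N)). assert (0 <= u / INR N) by (apply Rdiv_le_0_compat; lra). lra.
Qed.

Lemma is_derive_id_R (t : R) : is_derive (fun t : R => t) t 1.
Proof. exact (@is_derive_id R_AbsRing t). Qed.

Definition gk (k : nat) (t : R) : R := if Rlt_dec 0 t then (/t)^k * exp (- / t) else 0.

Lemma is_derive_invpow k t : t <> 0 -> is_derive (fun t => (/t)^k) t (-(INR k) * (/t)^(S k)).
Proof.
  intros Ht. induction k.
  - simpl. apply (is_derive_ext (fun _ => 1)). intros; reflexivity.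
    replace (- 0 * (/ t * 1)) with (@zero R_NormedModule). apply is_derive_const.
    unfold zero; simpl. ring.
  - apply (is_derive_ext (fun t => (/t) * (/t)^k)). intros; reflexivity.
    eapply is_derive_ext; [intros; reflexivity|].
    assert (Hi : is_derive (fun t => / t) t (- 1 / t ^ 2)).
    { apply (is_derive_inv (fun t => t) t 1). apply is_derive_id_R. exact Ht. }
    pose proof (is_derive_mult _ _ t _ _ Hi IHk) as Hm.
    assert (Hc : forall n m : R_AbsRing, mult n m = mult m n).
    { intros; unfold mult; simpl; ring. }
    specialize (Hm Hc).
    replace (- INR (S k) * (/ t) ^ S (S k)) with
      (plus (mult (- 1 / t ^ 2) ((/ t) ^ k)) (mult (/ t) (- INR k * (/ t) ^ S k))).
    exact Hm.
    rewrite S_INR. unfold plus, mult; simpl. field. exact Ht.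
Qed.

Lemma gk_pos k t : 0 < t -> gk k t = (/t)^k * exp (- / t).
Proof. intros H. unfold gk. destruct (Rlt_dec 0 t); [reflexivity | lra]. Qed.
Lemma gk_npos k t : t <= 0 -> gk k t = 0.
Proof. intros H. unfold gk. destruct (Rlt_dec 0 t); [lra | reflexivity]. Qed.

Lemma gk_ge0 k t : 0 <= gk k t.
Proof.
  unfold gk. destruct (Rlt_dec 0 t). apply Rmult_le_pos.
  apply pow_le. left; apply Rinv_0_lt_compat; lra. left; apply exp_pos. lra.
Qed.

Lemma gk_flat k h : 0 < h -> gk k h / h <= INR (k+2) ^ (k+2) * h.
Proof.
  intros Hh. rewrite gk_pos by lra.
  set (N := (k+2)%nat).
  assert (HN : 0 < INR N) by (apply lt_0_INR; unfold N; lia).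
  pose proof (exp_pow_bound N (/h) ltac:(unfold N; lia) ltac:(left; apply Rinv_0_lt_compat; lra)) as E.
  assert (E2 : exp (- / h) <= (INR N * h) ^ N).
  { rewrite exp_Ropp. 
    assert (Hp : 0 < (/ h / INR N) ^ N). { apply pow_lt. apply Rdiv_lt_0_compat; [apply Rinv_0_lt_compat|]; lra. }
    replace ((INR N * h) ^ N) with (/ ((/ h / INR N) ^ N)).
    apply Rinv_le_contravar; auto.
    rewrite <- pow_inv. f_equal. field. split; lra. }
  unfold Rdiv. rewrite Rmult_comm, <- Rmult_assoc.
  replace (/ h * (/ h) ^ k) with ((/h) ^ (S k)) by reflexivity.
  apply Rle_trans with ((/ h) ^ S k * (INR N * h) ^ N).
  apply Rmult_le_compat_l. apply pow_le. left; apply Rinv_0_lt_compat; lra. exact E2.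
  rewrite Rpow_mult_distr. unfold N. replace (k+2)%nat with (S k + 1)%nat by lia.
  rewrite (pow_add h). 
  replace ((/ h) ^ S k * (INR (S k + 1) ^ (S k + 1) * (h ^ S k * h ^ 1)))
    with (INR (S k + 1) ^ (S k + 1) * (((/ h) ^ S k * h ^ S k)) * h) by (simpl; ring).
  rewrite <- Rpow_mult_distr, Rinv_l by lra. rewrite pow1. right. simpl. ring.
Qed.

Lemma gk_derive k t : is_derive (gk k) t (gk (k+2) t - INR k * gk (k+1) t).
Proof.
  destruct (Rlt_le_dec 0 t) as [Ht|Ht].
  - rewrite !gk_pos by lra.
    apply (is_derive_ext_loc (fun t => (/t)^k * exp (- / t))).
    { apply (filter_imp (fun u => 0 < u)). intros y Hy. rewrite gk_pos by lra. reflexivity. apply (open_gt 0 t Ht). }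
    assert (Hi : is_derive (fun t => - / t) t (- (- 1 / t ^ 2))).
    { apply (is_derive_opp (fun t => / t)). apply (is_derive_inv (fun t => t) t 1). apply is_derive_id_R. lra. }
    assert (He : is_derive (fun t => exp (- / t)) t (scal (- (- 1 / t ^ 2)) (exp (- / t)))).
    { apply (is_derive_comp exp (fun t => - / t)). apply is_derive_exp. exact Hi. }
    pose proof (is_derive_mult _ _ t _ _ (is_derive_invpow k t ltac:(lra)) He) as Hm.
    assert (Hc : forall n m : R_AbsRing, mult n m = mult m n).
    { intros; unfold mult; simpl; ring. }
    specialize (Hm Hc).
    match goal with |- is_derive _ _ ?l => replace l with (plus (mult (- INR k * (/ t) ^ S k) (exp (- / t))) (mult ((/ t) ^ k) (scal (- (-1 / t ^ 2)) (exp (- / t))))) end.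
    exact Hm.
    unfold plus, mult, scal; simpl. unfold mult; simpl.
    replace (k+2)%nat with (S (S k)) by lia. replace (k+1)%nat with (S k) by lia.
    simpl. field. lra.
  - destruct Ht as [Ht|Ht].
    + rewrite !gk_npos by lra.
      apply (is_derive_ext_loc (fun _ => 0)).
      { apply (filter_imp (fun u => u < 0)). intros y Hy. rewrite gk_npos by lra. reflexivity. apply (open_lt 0 t Ht). }
      replace (0 - INR k * 0) with (@zero R_NormedModule). apply is_derive_const.
      unfold zero; simpl; ring.
    + subst t. rewrite !gk_npos by lra. replace (0 - INR k * 0) with 0 by ring.
      apply is_derive_Reals. intros eps Heps.
      set (C := INR (k+2) ^ (k+2)).
      assert (HC : 0 < C) by (apply pow_lt, lt_0_INR; lia).
      exists (mkposreal (eps / C) (Rdiv_lt_0_compat _ _ Heps HC)). simpl.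
      intros h Hh0 Hh. rewrite Rplus_0_l, (gk_npos k 0) by lra.
      rewrite Rminus_0_r, Rminus_0_r.
      destruct (Rlt_le_dec 0 h) as [Hp|Hn].
      * pose proof (gk_flat k h Hp) as F. pose proof (gk_ge0 k h).
        assert (0 <= gk k h / h) by (apply Rdiv_le_0_compat; lra).
        rewrite Rabs_right by lra. rewrite Rabs_right in Hh by lra.
        apply Rle_lt_trans with (C * h). exact F.
        apply Rmult_lt_reg_r with (/ C). apply Rinv_0_lt_compat; lra.
        replace (C * h * / C) with h by (field; lra). exact Hh.
      * rewrite gk_npos by lra. unfold Rdiv. rewrite Rmult_0_l, Rabs_R0. exact Heps.
Qed.

Lemma Cn_gk n : forall k, Cn n (gk k).
Proof.
  induction n; intros k. apply Cn_0.
  apply Cn_S. intros s. eexists. apply gk_derive.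
  apply (Cn_ext n (fun t => gk (k+2) t + (- INR k) * gk (k+1) t)).
  intros t. symmetry. rewrite (is_derive_unique _ _ _ (gk_derive k t)). ring.
  apply Cn_plus. apply IHn. apply Cn_mult. apply Cn_const. apply IHn.
Qed.

Lemma smooth_Cn f : (forall n, Cn n f) -> forall n s, ex_derive_n f n s.
Proof. intros H n s. apply (H n n). lia. Qed.

Lemma Cn_smooth f : (forall n s, ex_derive_n f n s) -> forall n, Cn n f.
Proof. intros H n m _ s. apply H. Qed.

Lemma cont_eps (g : R -> R) x0 : ex_derive g x0 ->
  forall eps, 0 < eps -> exists d, 0 < d /\ forall y, Rabs (y - x0) < d -> Rabs (g y - g x0) < eps.
Proof.
  intros Hd eps He.
  pose proof (ex_derive_continuous g x0 Hd) as Hc.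
  apply continuity_pt_filterlim in Hc.
  destruct (Hc eps He) as [d [Hd0 Hd1]].
  exists d. split. lra. intros y Hy.
  destruct (Req_dec y x0) as [E|E]. subst y. rewrite Rminus_eq_0, Rabs_R0. lra.
  apply Hd1. split. split. exact I. auto. exact Hy.
Qed.

Lemma is_derive_val (f : R -> R) x (l l' : R) : l = l' -> is_derive f x l -> is_derive f x l'.
Proof. intros ->; auto. Qed.

Definition psi so s := s - gk 0 (so - s).
Definition p1 so s := 1 + gk 2 (so - s).
Definition p2 so s := - (gk 4 (so - s) - 2 * gk 3 (so - s)).

Lemma is_derive_shift k so s : is_derive (fun s => gk k (so - s)) s (- (gk (k+2) (so - s) - INR k * gk (k+1) (so - s))).
Proof.
  assert (Hl : is_derive (fun s => so - s) s (-1)).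
  { auto_derive. exact I. ring. }
  pose proof (is_derive_comp (gk k) (fun s => so - s) s _ _ (gk_derive k (so - s)) Hl) as H.
  eapply is_derive_val; [|exact H]. unfold scal; simpl; unfold mult; simpl. ring.
Qed.

Lemma is_derive_psi so s : is_derive (psi so) s (p1 so s).
Proof.
  unfold psi, p1.
  pose proof (is_derive_minus (fun s => s) (fun s => gk 0 (so - s)) s _ _ (is_derive_id_R s) (is_derive_shift 0 so s)) as H.
  eapply is_derive_ext; [|replace (1 + gk 2 (so - s)) with (minus 1 (- (gk (0 + 2) (so - s) - INR 0 * gk (0 + 1) (so - s)))); [exact H|]].
  intros; reflexivity. unfold minus, plus, opp; simpl. ring.
Qed.

Lemma is_derive_p1 so s : is_derive (p1 so) s (p2 so s).
Proof.
  unfold p1, p2.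
  pose proof (is_derive_plus (fun _ => 1) (fun s => gk 2 (so - s)) s _ _ (is_derive_const 1 s) (is_derive_shift 2 so s)) as H.
  eapply is_derive_ext; [|replace (- (gk 4 (so - s) - 2 * gk 3 (so - s))) with (plus zero (- (gk (2 + 2) (so - s) - INR 2 * gk (2 + 1) (so - s)))); [exact H|]].
  intros; reflexivity. unfold zero, plus; simpl. ring.
Qed.

Lemma Cn_psi n so : Cn n (psi so).
Proof.
  apply (Cn_ext n (fun s => s + (-1) * gk 0 (so + (-1) * s))).
  intros t; unfold psi. replace (so + -1 * t) with (so - t) by ring. ring.
  apply Cn_plus. apply Cn_id. apply Cn_mult. apply Cn_const.
  apply Cn_comp. apply Cn_gk. apply Cn_plus. apply Cn_const. apply Cn_mult. apply Cn_const. apply Cn_id.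
Qed.

Definition smooth' (f : R -> R) : Prop := forall (n : nat) (s : R), ex_derive_n f n s.

Lemma smooth_comp_psi f so : smooth' f -> smooth' (fun s => f (psi so s)).
Proof.
  intros Hf. unfold smooth'. apply smooth_Cn. intros n. apply Cn_comp. apply Cn_smooth. exact Hf. apply Cn_psi.
Qed.

Lemma Dft f so s : smooth' f -> Derive (fun s => f (psi so s)) s = p1 so s * Derive f (psi so s).
Proof.
  intros Hf. rewrite Derive_comp. rewrite (is_derive_unique _ _ _ (is_derive_psi so s)). reflexivity.
  exact (Hf 1%nat (psi so s)). eexists; apply is_derive_psi.
Qed.

Lemma D2ft f so s : smooth' f -> Derive_n (fun s => f (psi so s)) 2 s =
   p2 so s * Derive f (psi so s) + p1 so s * (p1 so s * Derive_n f 2 (psi so s)).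
Proof.
  intros Hf.
  transitivity (Derive (fun s => p1 so s * Derive f (psi so s)) s).
  simpl. apply Derive_ext. intros t. apply Dft. exact Hf.
  rewrite Derive_mult. rewrite (is_derive_unique _ _ _ (is_derive_p1 so s)).
  rewrite (Derive_comp (Derive f) (psi so) s). rewrite (is_derive_unique _ _ _ (is_derive_psi so s)). reflexivity.
  exact (Hf 2%nat (psi so s)). eexists; apply is_derive_psi.
  eexists; apply is_derive_p1.
  apply (ex_derive_comp (Derive f) (psi so) s). exact (Hf 2%nat (psi so s)). eexists; apply is_derive_psi.
Qed.

Lemma mu_comp f x so s : smooth f -> f (psi so s) <> 0 ->
  mu (fun s => f (psi so s)) x s = mu f x (psi so s) +
   ((1 - p1 so s ^ 2) * (Derive f (psi so s) ^ 2 + 2 * Derive_n f 2 (psi so s) * f (psi so s))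
     - 2 * Derive f (psi so s) * f (psi so s) * p2 so s) / f (psi so s) ^ 2.
Proof.
  intros Hf H0.
  unfold mu, scal_warped, trK, normK2.
  rewrite (D2ft f so s Hf), (Dft f so s Hf).
  field. exact H0.
Qed.

Lemma delta_pos_alg t e F0 F1 F2 M b :
  0 < t -> t <= 1/4 -> 0 < e -> e <= t -> Rabs (F1^2 + 2*F2*F0) <= M -> b < F1*F0 -> 0 < b ->
  2*t*(M+1) <= b ->
  0 < (1 - (1 + (/t)^2 * e)^2) * (F1^2 + 2*F2*F0) - 2*F1*F0*(-( (/t)^4*e - 2*((/t)^3*e))).
Proof.
  intros Ht Ht4 He Het HA HP Hb Hd.
  set (A := F1^2 + 2*F2*F0) in *. set (P := F1*F0) in *.
  assert (HM : 0 <= M) by (pose proof (Rabs_pos A); lra).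
  assert (HA2 : - M <= A <= M) by (pose proof (proj1 (Rabs_le_between A M) HA); lra).
  assert (E : (1 - (1 + (/t)^2 * e)^2) * A - 2*F1*F0*(-( (/t)^4*e - 2*((/t)^3*e)))
     = (e / t^4) * ( -(2*t^2+e)*A + 2*P*(1-2*t) )).
  { unfold P. field. lra. }
  rewrite E. apply Rmult_lt_0_compat. apply Rdiv_lt_0_compat. lra. apply pow_lt; lra.
  assert (H1 : -(2*t^2+e)*A >= -(2*t)*M).
  { assert (0 < 2*t^2+e) by nra. assert (2*t^2+e <= 2*t) by nra.
    assert ((2*t^2+e)*A <= (2*t^2+e)*M) by (apply Rmult_le_compat_l; lra).
    assert ((2*t^2+e)*M <= (2*t)*M) by (apply Rmult_le_compat_r; lra). lra. }
  assert (H2 : 2*t*M < b) by nra.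
  assert (H3 : 2*P*(1-2*t) >= P) by nra.
  lra.
Qed.

Lemma part2_alg t e F1 L1 L :
  0 < t -> 0 <= e -> e <= 256 * t^4 -> 0 <= F1 -> F1 <= 3/2 * L1 -> L1 - F1 > L/2 * t ->
  t*(768*L1) <= L -> F1*(1 + (/t)^2*e) < L1.
Proof.
  intros Ht He1 He2 HF1 HF2 HL Hd.
  assert (Hq : (/t)^2 * e <= 256 * t^2).
  { replace (256 * t^2) with ((/t)^2 * (256 * t^4)) by (field; lra).
    apply Rmult_le_compat_l. apply pow_le. left; apply Rinv_0_lt_compat; lra. exact He2. }
  assert (Hq0 : 0 <= (/t)^2 * e) by (apply Rmult_le_pos; [apply pow_le; left; apply Rinv_0_lt_compat; lra| lra]).
  assert (F1 * ((/t)^2*e) <= 3/2*L1 * (256 * t^2)).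
  { apply Rmult_le_compat; lra. }
  nra.
Qed.

Lemma exp_le_t t : 0 < t -> exp (- / t) <= t.
Proof.
  intros Ht. rewrite exp_Ropp.
  assert (Hi : 0 < / t) by (apply Rinv_0_lt_compat; lra).
  pose proof (exp_ineq1_le (/ t)).
  replace t with (/ / t) at 2 by (field; lra).
  apply Rinv_le_contravar. exact Hi. lra.
Qed.

Lemma exp_le_t4 t : 0 < t -> exp (- / t) <= 256 * t ^ 4.
Proof.
  intros Ht. rewrite exp_Ropp.
  assert (Hi : 0 < / t) by (apply Rinv_0_lt_compat; lra).
  pose proof (exp_pow_bound 4 (/ t) ltac:(lia) ltac:(lra)) as E.
  assert (Hp : 0 < (/ t / INR 4) ^ 4) by (apply pow_lt; apply Rdiv_lt_0_compat; [lra| simpl; lra]).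
  replace (256 * t ^ 4) with (/ ((/ t / INR 4) ^ 4)).
  apply Rinv_le_contravar; auto. simpl. field. lra.
Qed.

Lemma psi_right so s : so <= s -> psi so s = s.
Proof. intros H. unfold psi. rewrite gk_npos by lra. ring. Qed.
Lemma p1_right so s : so <= s -> p1 so s = 1.
Proof. intros H. unfold p1. rewrite gk_npos by lra. ring. Qed.
Lemma p2_right so s : so <= s -> p2 so s = 0.
Proof. intros H. unfold p2. rewrite !gk_npos by lra. ring. Qed.
Lemma psi_left so s : s < so -> psi so s = s - exp (- / (so - s)).
Proof. intros H. unfold psi. rewrite gk_pos by lra. simpl. ring. Qed.

Lemma A_bound F0 F1 F2 P Q R0 : 0 <= F0 <= P -> 0 <= F1 <= Q -> Rabs F2 <= R0 ->
  Rabs (F1^2 + 2*F2*F0) <= Q^2 + 2*R0*P.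
Proof.
  intros H0 H1 H2. eapply Rle_trans. apply Rabs_triang.
  rewrite Rabs_right by (apply Rle_ge, pow2_ge_0).
  rewrite Rabs_mult, Rabs_mult, (Rabs_right 2) by lra. rewrite (Rabs_right F0) by lra.
  assert (F1^2 <= Q^2) by (apply pow_incr; lra).
  assert (Rabs F2 * F0 <= R0 * P) by (apply Rmult_le_compat; try lra; apply Rabs_pos).
  lra.
Qed.

Theorem lemma4p5 (a : R) (f x : R -> R) (tau : R) :
  0 <= a ->
  smooth f ->
  (forall s, a <= s -> 0 < f s) ->
  C1_pos x ->
  (forall s, a <= s -> tau <= mu f x s) ->
  forall so : R, a < so -> 0 < Derive f so ->
    (exists (delta : R) (ft : R -> R), good_extension f x tau so delta ft) /\
    (forall c : R, 0 < c -> c < f so -> 0 < Derive_n f 2 so ->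
       exists (delta : R) (ft : R -> R), good_extension f x tau so delta ft /\
         c < ft (so - delta) /\ Derive ft (so - delta) < Derive f so).
Proof.
  intros Ha Hf Hpos Hx Hmu so Haso Hd1.
  assert (HF : 0 < f so) by (apply Hpos; lra).
  assert (Hex1 : ex_derive f so) by exact (Hf 1%nat so).
  assert (Hex2 : ex_derive (Derive f) so) by exact (Hf 2%nat so).
  assert (Hex3 : ex_derive (Derive_n f 2) so) by exact (Hf 3%nat so).
  destruct (cont_eps f so Hex1 (f so/2)) as [e0 [He0 H0]]. lra.
  destruct (cont_eps (Derive f) so Hex2 (Derive f so/2)) as [e1 [He1 H1]]. lra.
  destruct (cont_eps (Derive_n f 2) so Hex3 1) as [e2 [He2 H2]]. lra.
  set (M := (3/2 * Derive f so)^2 + 2 * (Rabs (Derive_n f 2 so) + 1) * (3/2 * f so)).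
  set (b := f so / 2 * (Derive f so / 2)).
  assert (Hb : 0 < b) by (unfold b; nra).
  assert (HM : 0 <= M) by (unfold M; pose proof (Rabs_pos (Derive_n f 2 so)); nra).
  set (m1 := Rmin (1/4) ((so-a)/2)). set (m2 := Rmin (e0/3) (e1/3)).
  set (m3 := Rmin m1 m2). set (m4 := Rmin (e2/3) (b/(2*(M+1)))).
  set (d1 := Rmin m3 m4).
  assert (Hd1p : 0 < d1).
  { unfold d1, m3, m4, m1, m2. repeat apply Rmin_pos; try lra.
    apply Rdiv_lt_0_compat; lra. }
  assert (B : d1 <= 1/4 /\ d1 <= (so-a)/2 /\ d1 <= e0/3 /\ d1 <= e1/3 /\ d1 <= e2/3 /\ d1 <= b/(2*(M+1))).
  { unfold d1, m3, m4, m1, m2. pose proof (Rmin_l (1/4) ((so-a)/2)). pose proof (Rmin_r (1/4) ((so-a)/2)).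
    pose proof (Rmin_l (e0/3) (e1/3)). pose proof (Rmin_r (e0/3) (e1/3)).
    pose proof (Rmin_l (Rmin (1/4) ((so-a)/2)) (Rmin (e0/3) (e1/3))). pose proof (Rmin_r (Rmin (1/4) ((so-a)/2)) (Rmin (e0/3) (e1/3))).
    pose proof (Rmin_l (e2/3) (b/(2*(M+1)))). pose proof (Rmin_r (e2/3) (b/(2*(M+1)))).
    pose proof (Rmin_l (Rmin (Rmin (1/4) ((so-a)/2)) (Rmin (e0/3) (e1/3))) (Rmin (e2/3) (b/(2*(M+1))))).
    pose proof (Rmin_r (Rmin (Rmin (1/4) ((so-a)/2)) (Rmin (e0/3) (e1/3))) (Rmin (e2/3) (b/(2*(M+1))))).
    lra. }
  destruct B as [B1 [B2 [B3 [B4 [B5 B6]]]]].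
  assert (Hloc : forall s, so - d1 <= s < so ->
     a <= psi so s /\ psi so s < so /\ Rabs (psi so s - so) < e0 /\ Rabs (psi so s - so) < e1 /\
     Rabs (psi so s - so) < e2 /\ so - psi so s >= so - s).
  { intros s Hs. rewrite psi_left by lra.
    pose proof (exp_le_t (so - s) ltac:(lra)). pose proof (exp_pos (- / (so - s))).
    rewrite Rabs_left by lra. lra. }
  assert (Hstrict : forall s, so - d1 <= s < so -> tau < mu (fun s => f (psi so s)) x s).
  { intros s Hs. destruct (Hloc s Hs) as [L1 [L2 [L3 [L4 [L5 L6]]]]].
    set (y := psi so s) in *.
    assert (Hfy : 0 < f y) by (apply Hpos; lra).
    rewrite (mu_comp f x so s Hf (Rgt_not_eq _ _ Hfy)). fold y.
    assert (Hmy : tau <= mu f x y) by (apply Hmu; lra).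
    assert (0 < ((1 - p1 so s ^ 2) * (Derive f y ^ 2 + 2 * Derive_n f 2 y * f y)
       - 2 * Derive f y * f y * p2 so s) / f y ^ 2); [|lra].
    apply Rdiv_lt_0_compat; [|apply pow_lt; lra].
    unfold p1, p2. rewrite !gk_pos by lra.
    specialize (H0 y L3). specialize (H1 y L4). specialize (H2 y L5).
    apply Rabs_lt_between in H0. apply Rabs_lt_between in H1. apply Rabs_lt_between in H2.
    set (t := so - s). set (e := exp (- / t)).
    assert (Ht : 0 < t) by (unfold t; lra).
    pose proof (exp_le_t t Ht). pose proof (exp_pos (- / t)).
    pose proof (delta_pos_alg t e (f y) (Derive f y) (Derive_n f 2 y) M b Ht ltac:(unfold t; lra)
      ltac:(unfold e; lra) ltac:(unfold e; lra)) as D.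
    assert (HA : Rabs (Derive f y ^ 2 + 2 * Derive_n f 2 y * f y) <= M).
    { unfold M. apply A_bound; try lra.
      apply Rabs_le_between. pose proof (Rabs_pos (Derive_n f 2 so)).
      destruct (Rle_dec 0 (Derive_n f 2 so)). rewrite Rabs_right; lra. rewrite Rabs_left; lra. }
    specialize (D HA ltac:(unfold b; nra) Hb).
    assert (HtM : 2 * t * (M + 1) <= b).
    { assert (t <= b / (2 * (M+1))) by (unfold t; lra).
      replace b with (b / (2 * (M+1)) * (2 * (M+1))) by (field; lra). nra. }
    specialize (D HtM). exact D. }
  assert (Hcore : forall d, 0 < d -> d <= d1 -> good_extension f x tau so d (fun s => f (psi so s))).
  { intros d Hd Hdd. unfold good_extension. split; [exact Hd|]. split.
    { exact (smooth_comp_psi f so Hf). }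
    split.
    { intros s Hs. destruct (Rlt_le_dec s so) as [Hl|Hr].
      destruct (Hloc s ltac:(lra)) as [L1 _]. apply Hpos; lra.
      rewrite psi_right by lra. apply Hpos; lra. }
    split.
    { intros s Hs. rewrite psi_right by lra. reflexivity. }
    split.
    { intros s Hs. destruct (Rlt_le_dec s so) as [Hl|Hr].
      left. apply Hstrict; lra.
      assert (Hfs : 0 < f s) by (apply Hpos; lra).
      rewrite (mu_comp f x so s Hf) by (rewrite psi_right by lra; apply Rgt_not_eq; lra).
      rewrite psi_right, p1_right, p2_right by lra.
      replace (((1 - 1 ^ 2) * (Derive f s ^ 2 + 2 * Derive_n f 2 s * f s) - 2 * Derive f s * f s * 0) / f s ^ 2) with 0 by (field; lra).
      rewrite Rplus_0_r. apply Hmu; lra. }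
    { intros s Hs. apply Hstrict; lra. } }
  split.
  { exists d1, (fun s => f (psi so s)). apply Hcore; lra. }
  intros c Hc0 Hcs HL.
  destruct (cont_eps f so Hex1 (f so - c)) as [e3 [He3 H3]]. lra.
  pose proof (Derive_correct _ _ Hex2) as HD2.
  apply is_derive_Reals in HD2.
  destruct (HD2 (Derive_n f 2 so / 2) ltac:(lra)) as [[e4 He4] H4]. simpl in H4.
  set (L := Derive_n f 2 so) in *.
  set (d2 := Rmin (Rmin d1 (e3/3)) (Rmin (e4/3) (L / (768 * Derive f so)))).
  assert (Hd2p : 0 < d2).
  { unfold d2. repeat apply Rmin_pos; try lra. apply Rdiv_lt_0_compat; lra. }
  assert (C : d2 <= d1 /\ d2 <= e3/3 /\ d2 <= e4/3 /\ d2 <= L / (768 * Derive f so)).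
  { unfold d2. pose proof (Rmin_l d1 (e3/3)). pose proof (Rmin_r d1 (e3/3)).
    pose proof (Rmin_l (e4/3) (L / (768 * Derive f so))). pose proof (Rmin_r (e4/3) (L / (768 * Derive f so))).
    pose proof (Rmin_l (Rmin d1 (e3/3)) (Rmin (e4/3) (L / (768 * Derive f so)))).
    pose proof (Rmin_r (Rmin d1 (e3/3)) (Rmin (e4/3) (L / (768 * Derive f so)))).
    lra. }
  destruct C as [C1 [C2 [C3 C4]]].
  exists d2, (fun s => f (psi so s)). split. apply Hcore; lra.
  set (s := so - d2).
  assert (Hs : so - d1 <= s < so) by (unfold s; lra).
  destruct (Hloc s Hs) as [L1 [L2 [L3 [L4 [L5 L6]]]]].
  pose proof (psi_left so s ltac:(lra)) as Hps.
  set (y := psi so s) in *.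
  assert (Hy3 : Rabs (y - so) < e3).
  { rewrite Hps. pose proof (exp_le_t (so - s) ltac:(lra)). pose proof (exp_pos (- / (so - s))).
    rewrite Rabs_left by lra. unfold s in *. lra. }
  split.
  { specialize (H3 y Hy3). apply Rabs_lt_between in H3. lra. }
  rewrite Dft by exact Hf. fold y.
  unfold p1. rewrite gk_pos by lra.
  assert (Ht : 0 < so - s) by lra.
  specialize (H1 y L4). apply Rabs_lt_between in H1.
  assert (Hh : y - so <> 0) by lra.
  assert (Hh2 : Rabs (y - so) < e4).
  { rewrite Hps. pose proof (exp_le_t (so - s) Ht). pose proof (exp_pos (- / (so - s))).
    rewrite Rabs_left by lra. unfold s in *. lra. }
  specialize (H4 (y - so) Hh Hh2).
  replace (so + (y - so)) with y in H4 by ring.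
  apply Rabs_lt_between in H4. change (Derive (Derive f) so) with L in H4. change (Derive (fun x : R => Derive (fun x0 : R => f x0) x) so) with L in H4.
  assert (HLF : Derive f so - Derive f y > L / 2 * (so - s)).
  { assert (Hq : (Derive f y - Derive f so) / (y - so) > L / 2) by lra.
    assert (Hneg : y - so < 0) by lra.
    assert (Derive f y - Derive f so < L / 2 * (y - so)).
    { apply Rmult_lt_reg_r with (/ (so - y)). apply Rinv_0_lt_compat; lra.
      replace ((Derive f y - Derive f so) * / (so - y)) with (- ((Derive f y - Derive f so) / (y - so))) by (field; lra).
      replace (L / 2 * (y - so) * / (so - y)) with (- (L/2)) by (field; lra). lra. }
    nra. }
  rewrite Rmult_comm.
  apply (part2_alg (so - s) (exp (- / (so - s))) (Derive f y) (Derive f so) L Ht).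
  left; apply exp_pos. apply exp_le_t4; exact Ht. lra. lra. exact HLF.
  assert (so - s <= L / (768 * Derive f so)) by (unfold s; lra).
  replace L with (L / (768 * Derive f so) * (768 * Derive f so)) by (field; lra).
  apply Rmult_le_compat_r; lra.
Qed.
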